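(* Let $G$ and $H$ be finite graphs such that $H$ fractionally tiles $G$. Let $f(K)$ denote any one of the following for a graph $K$: (a) the number of independent sets in $K$; (b) the number of proper colorings of $K$ with a fixed number $q$ of colors; (c) the total weight of the homomorphisms from $K$ to a fixed finite graph $F$, where the vertices of $F$ carry arbitrary fixed positive weights. Then $$f(G)^{1/|G|}\le f(H)^{1/|H|}.$$
   Context: A set of vertices is independent if no two of its vertices are adjacent (the empty set counts). A homomorphism from $K$ to $F$ is a map $V(K)\to V(F)$ sending adjacent vertices to adjacent vertices. Given $w:V(F)\to(0,\infty)$, the weight of a map $\phi:V(K)\to V(F)$ is $\prod_{x\in V(K)}w(\phi(x))$, and the total weight of a set of maps is the sum of their weights. A copy of $H$ in $G$ is a subgraph isomorphic to $H$; $H$ fractionally tiles $G$ means there is a finite list of copies of $H$ in $G$ such that every vertex of $G$ is covered the same number of times. $|K|$ is the number of vertices. *)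

(* Defs.v *)
From HB Require Import structures.
From mathcomp Require Import all_boot all_order all_algebra.
From mathcomp Require Import all_classical all_reals all_analysis.
Set Implicit Arguments. Unset Strict Implicit. Unset Printing Implicit Defensive.
Import Order.TTheory GRing.Theory Num.Theory.
Local Open Scope ring_scope.

Definition simple_graph (V : finType) (e : rel V) : Prop :=
  symmetric e /\ irreflexive e.

Definition independent (V : finType) (e : rel V) (S : {set V}) : bool :=
  [forall x in S, forall y in S, ~~ e x y].

Definition num_indep (V : finType) (e : rel V) : nat :=
  #|[set S : {set V} | independent e S]|.

Definition proper_coloring (V : finType) (e : rel V) (q : nat)
  (c : {ffun V -> 'I_q}) : bool :=
  [forall x, forall y, e x y ==> (c x != c y)].

Definition num_colorings (V : finType) (e : rel V) (q : nat) : nat :=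
  #|[set c : {ffun V -> 'I_q} | proper_coloring e c]|.

Definition is_hom (VK VF : finType) (eK : rel VK) (eF : rel VF)
  (phi : {ffun VK -> VF}) : bool :=
  [forall x, forall y, eK x y ==> eF (phi x) (phi y)].

Definition hom_weight (R : realType) (VK VF : finType) (eK : rel VK) (eF : rel VF)
  (w : VF -> R) : R :=
  \sum_(phi : {ffun VK -> VF} | is_hom eK eF phi) \prod_(x : VK) w (phi x).

Definition is_copy (VH VG : finType) (eH : rel VH) (eG : rel VG)
  (S : {set VG}) (E : rel VG) : Prop :=
  (forall x y, E x y -> eG x y) /\
  (forall x y, E x y -> x \in S /\ y \in S) /\
  exists phi : VH -> VG,
    injective phi /\ S = [set phi x | x in VH] /\
    (forall x y, eH x y = E (phi x) (phi y)).

Definition frac_tiles (VH VG : finType) (eH : rel VH) (eG : rel VG) : Prop :=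
  exists (L : seq ({set VG} * rel VG)) (k : nat),
    (0 < k)%N /\
    (forall i, (i < size L)%N -> is_copy eH eG (nth (@finset.set0 VG, fun _ _ => false) L i).1 (nth (@finset.set0 VG, fun _ _ => false) L i).2) /\
    (forall v : VG, count (fun c : {set VG} * rel VG => v \in c.1) L = k).

(* Main.v *)
Require Import Defs.
From HB Require Import structures.
From mathcomp Require Import all_boot all_order all_algebra.
From mathcomp Require Import all_classical all_reals all_analysis.
Import Order.TTheory GRing.Theory Num.Theory.
Local Open Scope ring_scope.

Lemma powR_invK (R : realType) (a : R) (k : nat) : 0 <= a -> (0 < k)%N ->
  (a `^ (k%:R^-1)) ^+ k = a.
Proof.
move=> a0 k0; rewrite -powR_mulrn ?powR_ge0 // -powRrM mulVf ?powRr1 //.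
by rewrite pnatr_eq0 -lt0n.
Qed.

Lemma holder (R : realType) (I C : finType) (J : {set I}) (k : nat) (K : R)
  (B : I -> C -> R) (y : C -> R) :
  #|J| = k -> (0 < k)%N -> 0 <= K -> (forall j c, 0 <= B j c) ->
  (forall c, 0 <= y c) ->
  (forall c, y c ^+ k <= K * \prod_(j in J) B j c) ->
  (\sum_c y c) ^+ k <= K * \prod_(j in J) \sum_c B j c.
Proof.
move=> Jk k0 K0 B0 y0 hy.
have beta0 j : 0 <= \sum_c B j c by apply: sumr_ge0.
have RHS0 : 0 <= K * \prod_(j in J) \sum_c B j c.
  by apply: mulr_ge0 => //; apply: prodr_ge0.
have [Z|NZ] := eqVneq (K * \prod_(j in J) \sum_c B j c) 0.
  have yz c : y c = 0.
    have : K * \prod_(j in J) B j c = 0.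
      move/eqP: Z; rewrite mulf_eq0 => /orP[/eqP->|]; first by rewrite mul0r.
      rewrite prodf_seq_eq0 => /hasP[j jJ /andP[jJ' /eqP bj]].
      have := psumr_eq0P (fun c _ => B0 j c) bj => /(_ c isT) bjc.
      by rewrite (bigD1 j) //= bjc mul0r mulr0.
    move=> h; have := hy c; rewrite h => hc.
    have : y c ^+ k == 0 by rewrite eq_le hc exprn_ge0.
    by rewrite expf_eq0 => /andP[_ /eqP].
  by rewrite Z big1 // expr0n; case: k k0 {Jk hy}.
have Kpos : 0 < K.
  by rewrite lt_def K0 andbT; apply: contraNneq NZ => ->; rewrite mul0r.
have bpos j : j \in J -> 0 < \sum_c B j c.
  move=> jJ; rewrite lt_def beta0 andbT; apply: contraNneq NZ => bj.
  by rewrite (bigD1 j) //= bj mul0r mulr0.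
set P := K `^ (k%:R^-1) * \prod_(j in J) (\sum_c B j c) `^ (k%:R^-1).
have Ppos : 0 < P.
  apply: mulr_gt0; first exact: powR_gt0.
  by apply: prodr_gt0 => j jJ; apply: powR_gt0; apply: bpos.
have Pk : P ^+ k = K * \prod_(j in J) \sum_c B j c.
  rewrite /P exprMn powR_invK // -prodrXl; congr (_ * _).
  by apply: eq_bigr => j _; rewrite powR_invK.
rewrite -Pk; apply: lerXn2r; [by rewrite nnegrE sumr_ge0 | by rewrite nnegrE ltW |].
have kR : (k%:R : R) != 0 by rewrite pnatr_eq0 -lt0n.
have step c : y c / P <= (\sum_(j in J) B j c / \sum_c B j c) / k%:R.
  have AG := leif_AGM (A := mem J) (E := fun j => B j c / \sum_c B j c)
    (fun j jJ => divr_ge0 (B0 j c) (beta0 j)).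
  move: AG; rewrite Jk => -[AG _].
  rewrite -(ler_pXn2r k0); first last.
  - rewrite nnegrE divr_ge0 ?ler0n //; apply: sumr_ge0 => j _; exact: divr_ge0.
  - by rewrite nnegrE divr_ge0 // ltW.
  apply: le_trans AG; rewrite expr_div_n Pk prodf_div.
  rewrite ler_pdivrMr; last by apply: mulr_gt0 => //; apply: prodr_gt0 => j /bpos.
  rewrite mulrCA divfK; first exact: hy.
  by apply/lt0r_neq0/prodr_gt0 => j /bpos.
have : \sum_c (y c / P) <= 1.
  apply: le_trans (ler_sum _ (fun c _ => step c)) _.
  rewrite -mulr_suml exchange_big /=.
  rewrite (eq_bigr (fun _ => 1)); last first.
    by move=> j jJ; rewrite -mulr_suml divff // lt0r_neq0 // bpos.
  by rewrite sumr_const Jk divff.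
by rewrite -mulr_suml ler_pdivrMr // mul1r.


Qed.
Section Finner.
Variables (R : realType) (V C : finType).
Local Notation T := {ffun V -> C}.

Definition agree (D : {set V}) (x0 x : T) := [forall v, (v \notin D) ==> (x v == x0 v)].
Definition SumD (D : {set V}) (h : T -> R) (x0 : T) := \sum_(x | agree D x0 x) h x.
Definition upd (x0 : T) v (c : C) : T := [ffun u => if u == v then c else x0 u].
Definition dep (S : {set V}) (h : T -> R) :=
  forall x y : T, (forall v, v \in S -> x v = y v) -> h x = h y.

Lemma SumD0 (h : T -> R) (x0 : T) : SumD finset.set0 h x0 = h x0.
Proof.
rewrite /SumD (big_pred1 x0) // => x; rewrite /agree /=.
apply/forallP/eqP => [H|->]; last by move=> v; rewrite eqxx implybT.
by apply/ffunP => v; move: (H v); rewrite inE /= => /eqP.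
Qed.

Lemma updE (x0 : T) (v : V) (c : C) (u : V) : upd x0 v c u = if u == v then c else x0 u.
Proof. by rewrite ffunE. Qed.

Lemma SumD_split (D : {set V}) (v : V) (h : T -> R) (x0 : T) : v \notin D ->
  SumD (v |: D) h x0 = \sum_c SumD D h (upd x0 v c).
Proof.
move=> vD; rewrite /SumD (partition_big (fun x : T => x v) predT) //=.
apply: eq_bigr => c _; apply: eq_bigl => x; rewrite /agree.
apply/andP/forallP => [[/forallP H /eqP xv] u|H].
  rewrite updE; case: (u =P v) => [uv|/eqP uv]; first by rewrite uv xv eqxx implybT.
  by apply/implyP => uD; move: (H u); rewrite !inE (negbTE uv) (negbTE uD).
split.
  apply/forallP => u; apply/implyP; rewrite !inE negb_or => /andP[uv uD].
  by move: (H u); rewrite uD updE (negbTE uv).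
by move: (H v); rewrite vD updE eqxx.
Qed.

Lemma upd_upd (x : T) v a b : upd (upd x v a) v b = upd x v b.
Proof. by apply/ffunP => u; rewrite !updE; case: (u =P v). Qed.

Lemma upd_id (x : T) v : upd x v (x v) = x.
Proof. by apply/ffunP => u; rewrite !updE; case: (u =P v) => // ->. Qed.

Lemma SumD_upd (D : {set V}) (v : V) (h : T -> R) (x0 : T) (c : C) : v \notin D ->
  SumD D h (upd x0 v c) = SumD D (fun x => h (upd x v c)) x0.
Proof.
move=> vD; rewrite /SumD (reindex_onto (fun x => upd x v c) (fun x => upd x v (x0 v))).
  apply: eq_bigl => x; rewrite /agree upd_upd; apply/andP/forallP.
    move=> [/forallP H /eqP E] u; apply/implyP => uD.
    case: (u =P v) => [->|/eqP uv].
      by move/ffunP: E => /(_ v); rewrite !updE eqxx => ->.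
    by have := H u; rewrite uD !updE (negbTE uv).
  move=> H; split.
    apply/forallP => u; apply/implyP => uD; rewrite !updE.
    by case: (u =P v) => // _; have := H u; rewrite uD.
  apply/eqP/ffunP => u; rewrite !updE; case: (u =P v) => [->|] //.
  by have := H v; rewrite vD => /eqP.
move=> x /forallP H; rewrite upd_upd; apply/ffunP => u; rewrite !updE.
case: (u =P v) => [->|//]; have := H v; rewrite vD updE eqxx.
by move/eqP.
Qed.

Lemma dep_upd (S : {set V}) (h : T -> R) (x : T) (v : V) (c : C) : dep S h -> v \notin S -> h (upd x v c) = h x.
Proof.
move=> dh vS; apply: dh => u uS; rewrite updE; case: eqP => // uv.
by move: vS; rewrite -uv uS.
Qed.

Lemma SumD_ge0 (D : {set V}) (h : T -> R) (x0 : T) : (forall x, 0 <= h x) -> 0 <= SumD D h x0.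
Proof. by move=> h0; apply: sumr_ge0. Qed.

Variables (m k : nat) (S : 'I_m -> {set V}) (g : 'I_m -> T -> R).
Hypotheses (k0 : (0 < k)%N) (g0 : forall i x, 0 <= g i x)
  (gdep : forall i, dep (S i) (g i))
  (cover : forall v, #|[set i | v \in S i]| = k).

Lemma finner (D : {set V}) (x0 : T) :
  (SumD D (fun x => \prod_i g i x) x0) ^+ k <=
  \prod_i SumD (D :&: S i) (fun x => g i x ^+ k) x0.
Proof.
move: {2}(#|D|) (erefl #|D|) => n; elim: n D x0 => [|n IH] D x0 hD.
  move/eqP: hD; rewrite cards_eq0 => /eqP ->.
  rewrite SumD0 -prodrXl; apply: ler_prod => i _.
  by rewrite finset.set0I SumD0 exprn_ge0 ?lexx.
have [v vD] : exists v, v \in D.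
  by apply/set0Pn; rewrite -card_gt0 hD.
set D' := D :\ v.
have vD' : v \notin D' by rewrite /D' finset.setD11.
have eD : D = v |: D' by rewrite /D' finset.setD1K.
have hD' : #|D'| = n by move: (cardsD1 v D); rewrite vD hD add1n => -[].
set J := [set i | v \in S i].
set B := fun i c => SumD (D' :&: S i) (fun x => g i x ^+ k) (upd x0 v c).
set K := \prod_(i | v \notin S i) SumD (D :&: S i) (fun x => g i x ^+ k) x0.
have hB0 i c : 0 <= B i c by apply: SumD_ge0 => x; rewrite exprn_ge0.
have Bconst i c : v \notin S i -> B i c = SumD (D :&: S i) (fun x => g i x ^+ k) x0.
  move=> vS; rewrite /B SumD_upd; last by rewrite inE negb_and vS orbT.
  have -> : D :&: S i = D' :&: S i.
    apply/setP => u; rewrite eD !inE; case: eqP => // ->.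
    by rewrite (negbTE vS) !andbF.
  rewrite /SumD; apply: eq_bigr => x _.
  by rewrite (dep_upd _ _ _ _ _ (gdep i) vS).
have Bsum i : v \in S i -> \sum_c B i c = SumD (D :&: S i) (fun x => g i x ^+ k) x0.
  move=> vS; have -> : D :&: S i = v |: (D' :&: S i).
    apply/setP => u; rewrite eD !inE; case: eqP => // ->.
    by rewrite vS.
  by rewrite SumD_split // inE negb_and vD'.
rewrite [in X in _ <= X](bigID (fun i => v \in S i)) /= mulrC.
have -> : \prod_(i | v \in S i) SumD (D :&: S i) (fun x => g i x ^+ k) x0 =
          \prod_(i in J) \sum_c B i c.
  by apply: eq_big => [i|i]; rewrite ?inE // => /Bsum.
rewrite {1}eD SumD_split //.
apply: (@holder R _ C J k _ B (fun c => SumD D' (fun x => \prod_i g i x) (upd x0 v c)) (cover v)) => //.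
- by apply: prodr_ge0 => i _; apply: SumD_ge0 => x; rewrite exprn_ge0.
- by move=> c; apply: SumD_ge0 => x; apply: prodr_ge0.
move=> c; apply: le_trans (IH D' _ hD') _.
rewrite (bigID (fun i => v \in S i)) /= mulrC; apply: ler_pM.
- by apply: prodr_ge0 => i _; apply: hB0.
- by apply: prodr_ge0 => i _; apply: hB0.
- apply: ler_prod => i vS; apply/andP; split; first exact: hB0.
  by rewrite -(Bconst i c vS) /B.
by rewrite le_eqVlt; apply/orP; left; apply/eqP; apply: eq_bigl => i; rewrite inE.
Qed.

End Finner.
Arguments dep {R V C}.
Arguments SumD {R V C}.
Arguments agree {V C}.
Arguments upd {V C}.

Definition valid {C : finType} (ok : rel C) {V : finType} (e : rel V) (x : {ffun V -> C}) :=
  [forall a, forall b, e a b ==> ok (x a) (x b)].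
Definition Fw {R : realType} {C : finType} (ok : rel C) (w : C -> R) {V : finType} (e : rel V) : R :=
  \sum_(x : {ffun V -> C} | valid ok e x) \prod_v w (x v).

Lemma sum_sub_le (R : realType) (I : finType) (A : {pred I}) (G : I -> R) :
  (forall i, 0 <= G i) -> \sum_(i in A) G i <= \sum_i G i.
Proof.
by move=> G0; rewrite [X in _ <= X](bigID (mem A)) /= lerDl sumr_ge0.
Qed.

Lemma generic (R : realType) (C : finType) (ok : rel C) (w : C -> R)
  (VG VH : finType) (eG : rel VG) (eH : rel VH) :
  (forall c, 0 < w c) -> frac_tiles eH eG ->
  exists m k, (0 < k)%N /\ (m * #|VH| = k * #|VG|)%N /\
    Fw ok w eG ^+ k <= Fw ok w eH ^+ m.
Proof.
move=> wpos [L [k [k0 [hcopy hcount]]]].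
set d := (@finset.set0 VG, fun _ _ : VG => false).
set m := size L.
pose S (i : 'I_m) := (nth d L i).1.
pose E (i : 'I_m) := (nth d L i).2.
have copy i : is_copy eH eG (S i) (E i) by apply: hcopy.
have cover v : #|[set i | v \in S i]| = k.
  rewrite -(hcount v) -sum1_count (big_nth d) big_mkord.
  by rewrite sum_nat_cond_const muln1.
exists m, k; split => //; split.
  have e1 : (\sum_(v : VG) #|[set i | v \in S i]| = k * #|VG|)%N.
    by rewrite (eq_bigr (fun _ => k)) // sum_nat_const mulnC.
  rewrite -e1.
  transitivity (\sum_(i : 'I_m) #|S i|)%N.
    rewrite -{1}(card_ord m) -sum_nat_const; apply: eq_bigr => i _.
    have [_ [_ [phi [phii [-> _]]]]] := copy i.
    by rewrite card_imset.
  rewrite (eq_bigr (fun i => \sum_v (v \in S i : nat))%N); last first.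
    by move=> i _; rewrite -sum1_card big_mkcond /=; apply: eq_bigr => v _; case: (v \in S i).
  rewrite exchange_big /=; apply: eq_bigr => v _.
  rewrite -sum1_card [RHS]big_mkcond /=; apply: eq_bigr => i _; rewrite inE.
  by case: (v \in S i).
have F0 (V : finType) (e : rel V) : 0 <= Fw ok w e.
  by apply: sumr_ge0 => x _; apply: prodr_ge0 => v _; apply: ltW.
have [x0 _|none] := pickP (fun _ : {ffun VG -> C} => true); last first.
  rewrite /Fw big_pred0; last by move=> x; have := none x.
  by rewrite expr0n gtn_eqF //; apply: exprn_ge0; apply: (F0 _ eH).
pose om c := w c `^ (k%:R^-1).
have om0 c : 0 <= om c by apply: powR_ge0.
have omk c : om c ^+ k = w c by rewrite powR_invK // ltW.
pose g i (x : {ffun VG -> C}) := (valid ok (E i) x)%:R * \prod_(v in S i) om (x v).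
have g0 i x : 0 <= g i x by apply: mulr_ge0; [exact: ler0n | exact: prodr_ge0].
have key i (x y : {ffun VG -> C}) : (forall v, v \in S i -> x v = y v) ->
    valid ok (E i) x -> valid ok (E i) y.
  move=> hxy /forallP H; apply/forallP => a; apply/forallP => b; apply/implyP => Eab.
  have [_ [hS _]] := copy i; have [aS bS] := hS a b Eab.
  by move/forallP: (H a) => /(_ b) /implyP /(_ Eab); rewrite !hxy.
have gdep i : dep (S i) (g i).
  move=> x y hxy; rewrite /g; congr (_ * _).
    have E1 : valid ok (E i) x = valid ok (E i) y.
      by apply/idP/idP; apply: key => // v vS; rewrite hxy.
    by rewrite E1.
  by apply: eq_bigr => v vS; rewrite hxy.
have FIN := @finner R VG C m k S g k0 g0 gdep cover [set: VG] x0.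
have LHS0 : 0 <= SumD [set: VG] (fun x => \prod_i g i x) x0.
  by apply: SumD_ge0 => x; apply: prodr_ge0.
apply: le_trans (lerXn2r k _ _ _) (le_trans FIN _).
- by rewrite nnegrE.
- by rewrite nnegrE.
- rewrite /SumD /Fw [X in _ <= X](eq_bigl predT); last first.
    by move=> x; apply/forallP => v; rewrite finset.in_setT.
  rewrite [X in _ <= X](bigID (fun x => valid ok eG x)) /= -[X in X <= _]addr0.
  apply: lerD; last by apply: sumr_ge0 => x _; apply: prodr_ge0.
  rewrite le_eqVlt; apply/orP; left; apply/eqP; apply: eq_bigr => x vx.
  have vE i : valid ok (E i) x.
    apply/forallP => a; apply/forallP => b; apply/implyP => Eab.
    have [Esub _] := copy i.
    by move/forallP: vx => /(_ a) /forallP /(_ b) /implyP; apply; apply: Esub.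
  rewrite (eq_bigr (fun i => \prod_v (if v \in S i then om (x v) else 1))); last first.
    by move=> i _; rewrite /g vE mul1r big_mkcond.
  rewrite exchange_big /=; apply: eq_bigr => v _.
  rewrite -big_mkcond /= -(omk (x v)) -(cover v) -prodr_const.
  by apply: eq_bigl => i; rewrite inE.
apply: le_trans (_ : _ <= \prod_(i < m) Fw ok w eH) _; last by rewrite prodr_const card_ord.
apply: ler_prod => i _.
apply/andP; split; first by apply: SumD_ge0 => x; rewrite exprn_ge0.
rewrite finset.setTI.
have [Esub [Esupp [phi [phii [Sdef eHdef]]]]] := copy i.
pose pi (x : {ffun VG -> C}) : {ffun VH -> C} := [ffun u => x (phi u)].
pose G' (y : {ffun VH -> C}) := (valid ok eH y)%:R * \prod_u w (y u).
have G'0 y : 0 <= G' y.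
  by apply: mulr_ge0; [exact: ler0n | apply: prodr_ge0 => u _; apply: ltW].
have -> : Fw ok w eH = \sum_y G' y.
  rewrite /Fw big_mkcond; apply: eq_bigr => y _; rewrite /G'.
  by case: (valid ok eH y); rewrite ?mul1r ?mul0r.
apply: le_trans (@sum_sub_le R _ (mem (pi @: [set x | agree (S i) x0 x])) _ G'0).
rewrite big_imset /=; last first.
  move=> x x'; rewrite !inE => /forallP hx /forallP hx' pe.
  apply/ffunP => v; case vS: (v \in S i).
    move: vS; rewrite Sdef => /imsetP [u _ ->].
    by move/ffunP: pe => /(_ u); rewrite !ffunE.
  by have := hx v; have := hx' v; rewrite vS /= => /eqP -> /eqP ->.
rewrite /SumD (eq_bigl (mem [set x | agree (S i) x0 x])); last first.
  by move=> x; rewrite !inE.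
apply: ler_sum => x _.
rewrite /g exprMn -prodrXl (eq_bigr (fun v => w (x v))); last by move=> v _; rewrite omk.
rewrite Sdef big_imset /=; last by move=> a b _ _; apply: phii.
rewrite /G'.
have -> : (\prod_u w (pi x u)) = \prod_u w (x (phi u)).
  by apply: eq_bigr => u _; rewrite ffunE.
case vx: (valid ok (E i) x); last first.
  rewrite expr0n gtn_eqF // mul0r; apply: mulr_ge0; first exact: ler0n.
  by apply: prodr_ge0 => u _; apply: ltW.
have -> : valid ok eH (pi x).
  apply/forallP => a; apply/forallP => b; apply/implyP => hab.
  rewrite !ffunE; move: hab; rewrite eHdef => Eab.
  by move/forallP: vx => /(_ (phi a)) /forallP /(_ (phi b)) /implyP; apply.
by rewrite expr1n.
Qed.

Lemma Fw_count (R : realType) (C : finType) (ok : rel C) (V : finType) (e : rel V) :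
  Fw ok (fun _ : C => (1:R)) e = (#|[set x : {ffun V -> C} | valid ok e x]|)%:R.
Proof.
rewrite /Fw (eq_bigr (fun _ => (1:R))); last by move=> x _; rewrite big1_eq.
rewrite -sum1_card natr_sum; apply: eq_big => [x|x _]; first by rewrite inE.
by [].
Qed.

Lemma final_ineq (R : realType) (a b : R) (m k nG nH : nat) :
  0 <= a -> 0 <= b -> (0 < k)%N -> (0 < nG)%N -> (m * nH = k * nG)%N ->
  a ^+ k <= b ^+ m -> a `^ (nG%:R^-1) <= b `^ (nH%:R^-1).
Proof.
move=> a0 b0 k0 nG0 eq hab.
have : (0 < m * nH)%N by rewrite eq muln_gt0 k0.
rewrite muln_gt0 => /andP[m0 nH0].
have kR : (k%:R : R) != 0 by rewrite pnatr_eq0 -lt0n.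
have mR : (m%:R : R) != 0 by rewrite pnatr_eq0 -lt0n.
have e1 : a `^ (nG%:R^-1) = (a ^+ k) `^ ((k * nG)%:R^-1).
  by rewrite -powR_mulrn // -powRrM natrM invfM mulVKf.
have e2 : b `^ (nH%:R^-1) = (b ^+ m) `^ ((k * nG)%:R^-1).
  by rewrite -powR_mulrn // -powRrM -eq natrM invfM mulVKf.
rewrite e1 e2; apply: ge0_ler_powR => //.
- by rewrite nnegrE exprn_ge0.
- by rewrite nnegrE exprn_ge0.
Qed.

Lemma indep_count (V : finType) (e : rel V) (R : realType) :
  ((num_indep e)%:R : R) = Fw (fun a b : bool => ~~ (a && b)) (fun _ => (1:R)) e.
Proof.
rewrite Fw_count /num_indep; congr (_%:R).
rewrite -!sum1_card.
rewrite (reindex (fun S : {set V} => [ffun v => v \in S])) /=; last first.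
  exists (fun x : {ffun V -> bool} => [set v | x v]) => [S _|x _].
    by apply/setP => v; rewrite inE ffunE.
  by apply/ffunP => v; rewrite ffunE inE.
apply: eq_bigl => S; rewrite !inE /independent /valid.
apply/forall_inP/forallP => [H a|H a aS].
  apply/forallP => b; apply/implyP => eab; rewrite !ffunE.
  apply/negP => /andP[aS bS].
  by move/forall_inP: (H a aS) => /(_ b bS); rewrite eab.
apply/forall_inP => b bS; apply/negP => eab.
by move/forallP: (H a) => /(_ b) /implyP /(_ eab); rewrite !ffunE aS bS.
Qed.

Theorem proposition5p2 (R : realType)
  (VG : finType) (eG : rel VG) (VH : finType) (eH : rel VH)
  (hG : simple_graph eG) (hH : simple_graph eH)
  (hGne : (0 < #|VG|)%N)
  (htile : frac_tiles eH eG) :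
  (* (a) independent sets *)
  powR ((num_indep eG)%:R : R) (#|VG|%:R^-1)
    <= powR ((num_indep eH)%:R : R) (#|VH|%:R^-1)
  /\
  (* (b) proper q-colorings *)
  (forall q : nat,
    powR ((num_colorings eG q)%:R : R) (#|VG|%:R^-1)
      <= powR ((num_colorings eH q)%:R : R) (#|VH|%:R^-1))
  /\
  (* (c) weighted homomorphism counts into a fixed finite graph F *)
  (forall (VF : finType) (eF : rel VF) (w : VF -> R),
    symmetric eF -> (forall v, 0 < w v) ->
    powR (hom_weight eG eF w) (#|VG|%:R^-1)
      <= powR (hom_weight eH eF w) (#|VH|%:R^-1)).
Proof.
have gen (C : finType) (ok : rel C) (w : C -> R) : (forall c, 0 < w c) ->
    Fw ok w eG `^ (#|VG|%:R^-1) <= Fw ok w eH `^ (#|VH|%:R^-1).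
  move=> wpos; have [m [k [k0 [eq hle]]]] := @generic R C ok w VG VH eG eH wpos htile.
  have F0 (V : finType) (e : rel V) : 0 <= Fw ok w e.
    by apply: sumr_ge0 => x _; apply: prodr_ge0 => v _; apply: ltW.
  exact: (@final_ineq R _ _ m k _ _ (F0 _ _) (F0 _ _) k0 hGne eq hle).
split; first by rewrite !indep_count; apply: gen => _; apply: ltr01.
split.
  move=> q; rewrite /num_colorings.
  have := gen _ (fun a b : 'I_q => a != b) (fun _ => 1) (fun _ => ltr01).
  by rewrite !Fw_count.
by move=> VF eF w _ wpos; exact: (gen _ eF w wpos).
Qed.
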